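(* Let $q\in Q_{\rm safe}$, $a\in A$, $x\in q$ and $p_v\in\mathcal P_v$, and define $\gamma_{x,a}\in\mathcal D(Q)$ by $\gamma_{x,a}(q'):=T^{a}_{p_v}(q'\mid x)$ for all $q'\in Q$. Then $\gamma_{x,a}\in\Gamma_{q,a}$.
   Context: Fix $n\ge1$, $s\ge1$, $\varepsilon\ge0$. Let $U=\{1,\dots,m\}$ be a finite set of modes, and for each $u\in U$ let $f_u:\mathbb R^n\to\mathbb R^n$ be continuous. $\mathcal D(Y)$ denotes the Borel probability measures on $Y$, and $\mathcal D_s(\mathbb R^n)$ those with finite $s$-th moment. $\mathcal W_s$ is the $s$-Wasserstein distance on $\mathcal D_s(\mathbb R^n)$ induced by the Euclidean norm $\|\cdot\|$. Let $\widehat p_v\in\mathcal D_s(\mathbb R^n)$ be a nominal distribution and set $\mathcal P_v:=\{p\in\mathcal D_s(\mathbb R^n):\mathcal W_s(p,\widehat p_v)\le\varepsilon\}$. For a distribution $p_v$ on $\mathbb R^n$, $u\in U$, $x\in\mathbb R^n$ and Borel $B$, let $T^u_{p_v}(B\mid x):=p_v(\{v: f_u(x)+v\in B\})$. Abstraction. Let $X\subset\mathbb R^n$ be a bounded Borel set and $X_{\rm tgt}\subset X$. Let $Q_{\rm safe}$ be a finite family of pairwise disjoint Borel sets whose union is $X$, each of which is either contained in $X_{\rm tgt}$ or disjoint from it. Let $Q_{\rm tgt}$ be the members of $Q_{\rm safe}$ contained in $X_{\rm tgt}$, let $q_u:=\mathbb R^n\setminus X$, $Q:=Q_{\rm safe}\cup\{q_u\}$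 (a finite partition of $\mathbb R^n$), and $A:=U$. Let $\underline P,\overline P:Q\times A\times Q\to[0,1]$ satisfy $\underline P\le\overline P$ and $\sum_{q'}\underline P(q,a,q')\le1\le\sum_{q'}\overline P(q,a,q')$, with $\underline P(q,a,q')\le\inf_{x\in q}T^a_{\widehat p_v}(q'\mid x)$ and $\overline P(q,a,q')\ge\sup_{x\in q}T^a_{\widehat p_v}(q'\mid x)$ for all $q\in Q_{\rm safe}$, $a\in A$, $q'\in Q$, and $\underline P(q_u,a,q_u)=\overline P(q_u,a,q_u)=1$. Put $\widehat\Gamma_{q,a}:=\{\gamma\in\mathcal D(Q):\underline P(q,a,q')\le\gamma(q')\le\overline P(q,a,q')\ \forall q'\}$. Define the cost $c(q,q'):=\inf\{\|x-y\|^s:x\in q,y\in q'\}$ and, for $\gamma,\gamma'\in\mathcal D(Q)$, $\mathcal T_c(\gamma,\gamma'):=\min_{\pi}\sum_{q,q'}c(q,q')\pi(q,q')$, where the minimum is over couplings $\pi$ of $\gamma$ and $\gamma'$. For $q\in Q_{\rm safe}$ and $a\in A$ let $\Gamma_{q,a}:=\{\gamma\in\mathcal D(Q):\exists\widehat\gamma\in\widehat\Gamma_{q,a},\ \mathcal T_c(\gamma,\widehat\gamma)\le\varepsilon^s\}$, and let $\Gamma_{q_u,a}:=\widehat\Gamma_{q_u,a}$. *)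

(* Defs.v *)
From HB Require Import structures.
From mathcomp Require Import all_boot all_order all_algebra.
From mathcomp Require Import all_classical all_reals all_analysis.
Set Implicit Arguments. Unset Strict Implicit. Unset Printing Implicit Defensive.
Import Order.TTheory GRing.Theory Num.Theory.
Import numFieldNormedType.Exports.
Local Open Scope classical_set_scope.
Local Open Scope ring_scope.

(* R^n is 'rV[R]_n; its (library) topology is the product/max-norm topology,
   which coincides with the Euclidean one. *)

Definition enorm (R : realType) (n : nat) (x : 'rV[R]_n) : R :=
  Num.sqrt (\sum_(i < n) x ord0 i ^+ 2).

Definition Rn (R : realType) (n : nat) :=
  g_sigma_algebraType (@open 'rV[R]_n).

Definition edist (R : realType) (n : nat) (x y : 'rV[R]_n) : R := enorm (x - y).

Definition finite_moment (R : realType) (n : nat) (s : R)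
    (p : probability (Rn R n) R) : Prop :=
  (\int[p]_x ((enorm (x : 'rV[R]_n)) `^ s)%:E < +oo)%E.

Definition couplings (R : realType) (n : nat) (p q : probability (Rn R n) R)
  : set (probability (Rn R n * Rn R n)%type R) :=
  [set pi | (forall A : set (Rn R n), measurable A -> pi (A `*` setT) = p A) /\
            (forall B : set (Rn R n), measurable B -> pi (setT `*` B) = q B)].

Definition Wass (R : realType) (n : nat) (s : R) (p q : probability (Rn R n) R)
  : \bar R :=
  ((ereal_inf [set \int[pi]_z ((edist z.1 z.2) `^ s)%:E | pi in couplings p q])
     `^ s^-1)%E.

Definition Tker (R : realType) (n : nat) (pv : probability (Rn R n) R)
    (fu : 'rV[R]_n -> 'rV[R]_n) (B : set 'rV[R]_n) (x : 'rV[R]_n) : R :=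
  fine (pv [set v : Rn R n | B (fu x + v)]).

Definition is_distr (R : realType) (Q : finType) (g : Q -> R) : Prop :=
  (forall q, 0 <= g q) /\ \sum_(q : Q) g q = 1.

Definition dcoupling (R : realType) (Q : finType) (g g' : Q -> R)
    (pi : Q -> Q -> R) : Prop :=
  (forall q q', 0 <= pi q q') /\
  (forall q, \sum_(q' : Q) pi q q' = g q) /\
  (forall q', \sum_(q : Q) pi q q' = g' q').

Definition cellcost (R : realType) (n : nat) (s : R) (A B : set 'rV[R]_n) : R :=
  inf [set r | exists x y, A x /\ B y /\ r = (edist x y) `^ s].

(* optimal transport cost T_c(g, g') (the min over couplings, written as inf) *)
Definition Tc (R : realType) (Q : finType) (c : Q -> Q -> R) (g g' : Q -> R) : R :=
  inf [set \sum_(q : Q) \sum_(q' : Q) c q q' * pi q q' | pi in dcoupling g g'].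

Definition Gammahat (R : realType) (Q A : finType) (Pl Pu : Q -> A -> Q -> R)
    (q : Q) (a : A) : set (Q -> R) :=
  [set g | is_distr g /\ forall q', Pl q a q' <= g q' <= Pu q a q'].

(* Gamma_{q,a}; qu is the unsafe cell *)
Definition Gamma (R : realType) (n : nat) (s eps : R) (Q A : finType)
    (cell : Q -> set 'rV[R]_n) (qu : Q) (Pl Pu : Q -> A -> Q -> R)
    (q : Q) (a : A) : set (Q -> R) :=
  if q == qu then Gammahat Pl Pu q a
  else [set g | is_distr g /\
          exists2 gh, Gammahat Pl Pu q a gh &
            Tc (fun q1 q2 => cellcost s (cell q1) (cell q2)) g gh <= eps `^ s].

(* Main.v *)
Require Import Defs.
From HB Require Import structures.
From mathcomp Require Import all_boot all_order all_algebra.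
From mathcomp Require Import all_classical all_reals all_analysis.
From mathcomp Require Import measurable_realfun.
Import Order.TTheory GRing.Theory Num.Theory.
Import numFieldNormedType.Exports.
Local Open Scope classical_set_scope.
Local Open Scope ring_scope.

Lemma meas_transl (R : realType) (n : nat) (c : 'rV[R]_n) (A : set (Rn R n)) :
  measurable A -> measurable ([set v : Rn R n | A (c + v)]).
Proof.
move=> mA.
have mf : measurable_fun [set: Rn R n] (fun v : Rn R n => (c + v : Rn R n)).
  apply: (@measurability _ _ (Rn R n) (Rn R n) setT _ (@open 'rV[R]_n)) => //.
  move=> _ [B oB <-]; rewrite setTI.
  apply: sub_sigma_algebra.
  have hc : continuous (fun v : 'rV[R]_n => c + v).
    by move=> v; apply: continuousD => //; exact: cst_continuous.
  exact: open_comp (fun v _ => hc v) oB.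
have := mf measurableT A mA; rewrite setTI.
by congr measurable.
Qed.

Lemma int_mono d (T : measurableType d) (R : realType) (mu : {measure set T -> \bar R})
  (f1 f2 : T -> \bar R) : (forall x, 0 <= f1 x)%E -> (forall x, f1 x <= f2 x)%E ->
  (\int[mu]_x f1 x <= \int[mu]_x f2 x)%E.
Proof.
move=> f10 f12.
have f20 : forall x, (0 <= f2 x)%E by move=> x; exact: le_trans (f10 x) (f12 x).
rewrite !ge0_integralTE//.
apply: le_ereal_sup => _ [h hf <-]; exists h => //= x.
exact: le_trans (hf x) (f12 x).
Qed.

Lemma wass_bound (R : realType) (n : nat) (s eps : R) (p q : probability (Rn R n) R) :
  1 <= s -> 0 <= eps -> (Wass s p q <= eps%:E)%E ->
  forall dl : R, 0 < dl -> exists2 pi : probability (Rn R n * Rn R n)%type R, couplings p q pi &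
    (\int[pi]_z ((Defs.edist z.1 z.2) `^ s)%:E < (eps `^ s + dl)%:E)%E.
Proof.
move=> s1 eps0 hW dl dl0.
have s0 : 0 < s by apply: lt_le_trans s1.
set S := [set (\int[pi]_z ((Defs.edist z.1 z.2) `^ s)%:E)%E | pi in couplings p q].
have hI : (ereal_inf S <= (eps `^ s)%:E)%E.
  move: hW; rewrite /Wass -/S.
  have : (0 <= ereal_inf S)%E.
    apply: le_ereal_inf_tmp => _ [pi _ <-]; apply: integral_ge0 => z _.
    by rewrite lee_fin powR_ge0.
  case: (ereal_inf S) => [r| |] //= r0.
    move=> hr; rewrite lee_fin in hr; rewrite lee_fin.
    rewrite lee_fin in r0.
    have -> : r = (r `^ s^-1) `^ s.
      by rewrite -powRrM mulVf ?gt_eqF// powRr1.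
    apply: ge0_ler_powR => //; first exact: ltW.
      by rewrite nnegrE powR_ge0.
  by rewrite invr_eq0 gt_eqF...
have : (ereal_inf S < (eps `^ s + dl)%:E)%E.
  by apply: le_lt_trans hI _; rewrite lte_fin ltrDl.
by move=> /ereal_inf_lt [_ [pi hpi <-] h]; exists pi.
Qed.

Lemma meas_partition d (T : measurableType d) (R : realType) (Q : finType)
  (mu : {measure set T -> \bar R}) (F : Q -> set T) :
  (forall q, measurable (F q)) ->
  (forall q1 q2 y, F q1 y -> F q2 y -> q1 = q2) ->
  mu (\bigcup_(q in setT) F q) = (\sum_(q : Q) mu (F q))%E.
Proof.
move=> mF dF.
rewrite measure_fin_bigcup//; last 2 first.
- exact: finite_finset.
- by move=> i j _ _ [y [Fi Fj]]; exact: dF Fi Fj.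
rewrite (fsbigE (enum Q)) ?enum_uniq//; last by move=> i _; rewrite mem_enum.
rewrite big_enum_cond /=.
by apply: eq_bigl => i; rewrite in_setT.
Qed.

Theorem proposition1 (R : realType) (n : nat) (s eps : R)
  (U : finType) (f : U -> 'rV[R]_n -> 'rV[R]_n)
  (phat : probability (Rn R n) R)
  (X Xtgt : set 'rV[R]_n) (Q : finType) (cell : Q -> set 'rV[R]_n) (qu : Q)
  (Pl Pu : Q -> U -> Q -> R) :
  (0 < n)%N -> 1 <= s -> 0 <= eps ->
  (forall u, continuous (f u)) ->
  finite_moment s phat ->
  (* abstraction *)
  measurable (X : set (Rn R n)) ->
  (exists M : R, forall x, X x -> enorm x <= M) ->
  Xtgt `<=` X ->
  (forall q, q != qu -> measurable (cell q : set (Rn R n))) ->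
  (forall q, q != qu -> cell q !=set0) ->
  (forall q q', q != qu -> q' != qu -> q != q' -> cell q `&` cell q' = set0) ->
  (forall x, X x <-> exists2 q, q != qu & cell q x) ->
  (forall q, q != qu -> cell q `<=` Xtgt \/ cell q `&` Xtgt = set0) ->
  cell qu = ~` X ->
  (* interval transition bounds *)
  (forall q a q', 0 <= Pl q a q' /\ Pl q a q' <= Pu q a q' /\ Pu q a q' <= 1) ->
  (forall q a, \sum_(q' : Q) Pl q a q' <= 1 <= \sum_(q' : Q) Pu q a q') ->
  (forall q a q', q != qu -> forall x, cell q x ->
     Pl q a q' <= Tker phat (f a) (cell q') x <= Pu q a q') ->
  (forall a, Pl qu a qu = 1 /\ Pu qu a qu = 1) ->
  forall (q : Q) (a : U) (x : 'rV[R]_n) (pv : probability (Rn R n) R),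
    q != qu -> cell q x ->
    finite_moment s pv -> (Wass s pv phat <= eps%:E)%E ->
    Gamma s eps cell qu Pl Pu q a (fun q' => Tker pv (f a) (cell q') x).
Proof.
move=> n0 s1 eps0 fc mom mX bX XtX mcell ne dis Xiff tgt cqu Pb Psum PT Pqu q a x pv qqu cqx mompv hW.
rewrite /Gamma (negbTE qqu).
have mcellT : forall q', measurable (cell q' : set (Rn R n)).
  move=> q'; case: (eqVneq q' qu) => [->|/mcell //]; rewrite cqu; exact: measurableC.
have cov : forall y, exists q', cell q' y.
  move=> y; case: (pselect (X y)) => [/Xiff [q' _ h]|nX]; first by exists q'.
  by exists qu; rewrite cqu.
have dsj : forall q1 q2 y, cell q1 y -> cell q2 y -> q1 = q2.
  move=> q1 q2 y h1 h2.
  case: (eqVneq q1 qu) => e1; case: (eqVneq q2 qu) => e2.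
  - by rewrite e1 e2.
  - by exfalso; move: h1; rewrite e1 cqu; apply; apply/Xiff; exists q2.
  - by exfalso; move: h2; rewrite e2 cqu; apply; apply/Xiff; exists q1.
  - case: (eqVneq q1 q2) => // ne12.
    have H := dis q1 q2 e1 e2 ne12.
    have : (cell q1 `&` cell q2) y by [].
    by rewrite H.
set c := f a x.
pose Av q' : set (Rn R n) := [set v : Rn R n | cell q' (c + v)].
have mAv : forall q', measurable (Av q') by move=> q'; exact: meas_transl.
have Avcov : forall v, exists q', Av q' v by move=> v; exact: cov.
have Avdsj : forall q1 q2 v, Av q1 v -> Av q2 v -> q1 = q2.
  by move=> q1 q2 v; exact: dsj.
have Avbig : \bigcup_(q' in setT) Av q' = setT.
  apply/seteqP; split => // v _; have [q' h] := Avcov v; by exists q'.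
have distr : forall p : probability (Rn R n) R,
    is_distr (fun q' => fine (p (Av q'))).
  move=> p; split.
    by move=> q'; apply: fine_ge0; exact: measure_ge0.
  apply: EFin_inj; rewrite -sumEFin.
  under eq_bigr do rewrite fineK ?(fin_num_measure p _ (mAv _))//.
  by rewrite -meas_partition// Avbig; exact: probability_setT.
split; first exact: (distr pv).
exists (fun q' => Tker phat (f a) (cell q') x).
  by split; [exact: (distr phat) | move=> q'; exact: PT].

set cc := fun q1 q2 => cellcost s (cell q1) (cell q2).
have cc0 : forall q1 q2, 0 <= cc q1 q2.
  move=> q1 q2; rewrite /cc /cellcost.
  set S := [set r | _].
  case: (pselect (S !=set0)) => [hS|hS].
    apply: lb_le_inf => // _ [y [z [_ [_ ->]]]]; exact: powR_ge0.
  have -> : S = set0 by apply/seteqP; split => // r Sr; apply: hS; exists r.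
  by rewrite inf0.
have ccle : forall q1 q2 (v w : Rn R n), Av q1 v -> Av q2 w ->
    cc q1 q2 <= (Defs.edist v w) `^ s.
  move=> q1 q2 v w h1 h2; rewrite /cc /cellcost.
  have -> : Defs.edist v w = Defs.edist (c + v) (c + w).
    by rewrite /Defs.edist [c + v]addrC addrKA.
  apply: ge_inf; last by exists (c + v), (c + w).
  by exists 0 => _ [y [z [_ [_ ->]]]]; exact: powR_ge0.
apply/ler_addgt0Pr => dl dl0.
have [pi [m1 m2] hpi] := @wass_bound R n s eps pv phat s1 eps0 hW dl dl0.
have mrect : forall q1 q2, measurable (Av q1 `*` Av q2).
  by move=> q1 q2; exact: measurableX.
have finr : forall q1 q2, pi (Av q1 `*` Av q2) \is a fin_num.
  by move=> q1 q2; exact: fin_num_measure.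
pose pid q1 q2 := fine (pi (Av q1 `*` Av q2)).
have dc : dcoupling (fun q' => Tker pv (f a) (cell q') x)
    (fun q' => Tker phat (f a) (cell q') x) pid.
  split; first by move=> q1 q2; apply: fine_ge0; exact: measure_ge0.
  split.
    move=> q1; apply: EFin_inj; rewrite -sumEFin.
    under eq_bigr do rewrite fineK//.
    rewrite -meas_partition//; last first.
      by move=> i j [v w] [_ hi] [_ hj]; exact: Avdsj hi hj.
    rewrite (_ : Tker pv (f a) (cell q1) x = fine (pv (Av q1)))//.
    rewrite fineK ?(fin_num_measure pv _ (mAv _))// -m1//.
    congr (pi _); apply/seteqP; split.
      by move=> [v w] [i _ [h1 h2]].
    move=> [v w] [h1 _]; have [i hi] := Avcov w; by exists i.
  move=> q2; apply: EFin_inj; rewrite -sumEFin.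
  under eq_bigr do rewrite fineK//.
  rewrite -meas_partition//; last first.
    by move=> i j [v w] [hi _] [hj _]; exact: Avdsj hi hj.
  rewrite (_ : Tker phat (f a) (cell q2) x = fine (phat (Av q2)))//.
  rewrite fineK ?(fin_num_measure phat _ (mAv _))// -m2//.
  congr (pi _); apply/seteqP; split.
    by move=> [v w] [i _ [h1 h2]].
  move=> [v w] [_ h2]; have [i hi] := Avcov v; by exists i.
apply: le_trans (ge_inf _ _) _.
- exists 0 => _ [pi' [pi'0 _] <-].
  apply: sumr_ge0 => q1 _; apply: sumr_ge0 => q2 _; apply: mulr_ge0 => //.
- by exists pid.

have mterm : forall q1 q2, measurable_fun [set: (Rn R n * Rn R n)%type]
    (fun z => ((cc q1 q2 * \1_(Av q1 `*` Av q2) z)%:E : \bar R)).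
  move=> q1 q2; apply/measurable_EFinP; apply: measurable_funM.
    exact: measurable_cst.
  exact: measurable_indic.
have term0 : forall q1 q2 (z : (Rn R n * Rn R n)%type),
    (0 <= (cc q1 q2 * \1_(Av q1 `*` Av q2) z)%:E)%E.
  by move=> q1 q2 z; rewrite lee_fin mulr_ge0.
have eqint : forall q1 q2, ((cc q1 q2)%:E * pi (Av q1 `*` Av q2))%E =
    (\int[pi]_z (cc q1 q2 * \1_(Av q1 `*` Av q2) z)%:E)%E.
  move=> q1 q2.
  rewrite (@integralZl_indic _ _ _ pi setT measurableT (fun _ => Av q1 `*` Av q2) (cc q1 q2)) //; last first.
    by move=> /lt_geF; rewrite cc0.
  by rewrite integral_indic // setIT.
rewrite -lee_fin; apply: le_trans (ltW hpi).
rewrite -sumEFin.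
under eq_bigr do rewrite -sumEFin.
under eq_bigr do under eq_bigr do rewrite EFinM fineK// eqint.
under eq_bigr => q1 _ do rewrite -(@ge0_integral_sum _ _ _ pi setT measurableT Q
   (fun q2 z => (cc q1 q2 * \1_(Av q1 `*` Av q2) z)%:E) (mterm q1)
   (fun q2 z _ => term0 q1 q2 z)).
rewrite -(@ge0_integral_sum _ _ _ pi setT measurableT Q
   (fun q1 z => \sum_(q2 : Q) (cc q1 q2 * \1_(Av q1 `*` Av q2) z)%:E)%E); last 2 first.
- by move=> q1; apply: emeasurable_sum => q2; exact: mterm.
- by move=> q1 z _; apply: sume_ge0 => q2 _; exact: term0.
apply: int_mono.
  by move=> z; apply: sume_ge0 => q1 _; apply: sume_ge0 => q2 _; exact: term0.
move=> [v w]; have [q1 h1] := Avcov v; have [q2 h2] := Avcov w.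
rewrite (bigD1 q1) //= [X in (_ + X)%E]big1 ?adde0; last first.
  move=> i ni; apply: big1 => j _; rewrite indicE memNset ?mulr0 //.
  move=> [/= hi _]; move/negP: ni; apply; apply/eqP; exact: Avdsj hi h1.
rewrite (bigD1 q2) //= [X in (_ + X)%E]big1 ?adde0; last first.
  move=> j nj; rewrite indicE memNset ?mulr0 //.
  move=> [_ /= hj]; move/negP: nj; apply; apply/eqP; exact: Avdsj hj h2.
rewrite indicE mem_set // mulr1 lee_fin; exact: ccle.
Qed.
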